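(* Let $0<v_T<\tfrac12$ and $V_u>0$, and set $g_{\max}=F'(v_i)$ and $$g_\ast=\frac{F'(v_i)\,v_i-F(v_i)}{V_u}.$$ Then $g_\ast>0$, and for every $g$ with $g_\ast\le g<g_{\max}$ and every $k\ge 0$, the central cell fires when $v_u$ is raised from $0$ to $V_u$ if and only if $$k<\frac{F'(v_i)}{g}-1.$$
   Context: Fix $v_T\in(0,\tfrac12)$ and let $F(v)=v(v-v_T)(1-v)$, with local minimum at $v_{\min}$, local maximum at $v_{\max}$, inflection point $v_i=(1+v_T)/3$; $0<v_{\min}<v_T<v_i<v_{\max}<1$. Central-cell model: for $g>0$, real $k\ge0$ and upstream voltage $v_u$, $\frac{dv}{dt}=F(v)+g(v_u-v)-gkv$; equilibria solve $F(v)=g(k+1)v-gv_u$. Firing: given $V_u>0$, the central cell fires when $v_u$ is raised from $0$ to $V_u$ if there exist $v_{u,c}\in(0,V_u)$ and $v^*\in(v_{\min},v_i)$ with $F(v^* )=g(k+1)v^*-gv_{u,c}$ and $F'(v^* )=g(k+1)$ (a saddle-node collision of the rest and threshold equilibria). *)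

(* Defs.v *)
From Stdlib Require Import Reals Lra.
Open Scope R_scope.

Definition F (vT v : R) : R := v * (v - vT) * (1 - v).

Definition Fp (vT v : R) : R := -3 * v ^ 2 + 2 * (1 + vT) * v - vT.

Lemma Fp_is_derivative (vT v : R) : derivable_pt_lim (F vT) v (Fp vT v).
Proof.
  unfold F, Fp.
  assert (H : derivable_pt_lim
    (fun x => (x * (x - vT)) * (1 - x)) v
    (((1 * (v - vT)) + v * (1 - 0)) * (1 - v) + (v * (v - vT)) * (0 - 1))).
  { apply (derivable_pt_lim_mult (fun x => x * (x - vT)) (fun x => 1 - x)).
    - apply (derivable_pt_lim_mult id (fun x => x - vT)).
      + exact (derivable_pt_lim_id v).
      + apply (derivable_pt_lim_minus id (fct_cte vT)); [apply derivable_pt_lim_id | apply derivable_pt_lim_const].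
    - apply (derivable_pt_lim_minus (fct_cte 1) id); [apply derivable_pt_lim_const | apply derivable_pt_lim_id]. }
  replace (-3 * v ^ 2 + 2 * (1 + vT) * v - vT)
    with (((1 * (v - vT)) + v * (1 - 0)) * (1 - v) + (v * (v - vT)) * (0 - 1)) by ring.
  exact H.
Qed.

Definition vi (vT : R) : R := (1 + vT) / 3.

Definition vmin (vT : R) : R := ((1 + vT) - sqrt ((1 + vT) ^ 2 - 3 * vT)) / 3.
Definition vmax (vT : R) : R := ((1 + vT) + sqrt ((1 + vT) ^ 2 - 3 * vT)) / 3.

(* The central cell fires when v_u is raised from 0 to Vu: a saddle-node
   collision of the rest and threshold equilibria at some v_{u,c} in (0,Vu). *)
Definition fires (vT g k Vu : R) : Prop :=
  exists vuc vstar : R,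
    0 < vuc < Vu /\ vmin vT < vstar < vi vT /\
    F vT vstar = g * (k + 1) * vstar - g * vuc /\
    Fp vT vstar = g * (k + 1).

(* Main.v *)
Require Import Defs.
From Stdlib Require Import Reals Lra Psatz.
Open Scope R_scope.

Theorem mainTheorem2 (vT Vu : R) (HvT : 0 < vT < 1 / 2) (HVu : 0 < Vu) :
  let gmax := Fp vT (vi vT) in
  let gstar := (Fp vT (vi vT) * vi vT - F vT (vi vT)) / Vu in
  0 < gstar /\
  forall g k : R, gstar <= g < gmax -> 0 <= k ->
    (fires vT g k Vu <-> k < Fp vT (vi vT) / g - 1).
Proof.
  intros gmax gstar.
  set (a := 1 + vT).
  assert (Hh : Fp vT (vi vT) * vi vT - F vT (vi vT) = a ^ 3 / 27).
  { unfold Fp, F, vi, a. field. }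
  assert (Hgs : 0 < gstar).
  { unfold gstar. rewrite Hh. apply Rdiv_lt_0_compat; [|lra].
    unfold a. apply Rdiv_lt_0_compat; [nra|lra]. }
  assert (HFpvi : Fp vT (vi vT) = (a^2 - 3*vT)/3).
  { unfold Fp, vi, a. field. }
  assert (HD0 : 0 < a^2 - 3*vT) by (unfold a; nra).
  set (s0 := sqrt (a^2 - 3*vT)).
  assert (Hs0sq : s0 * s0 = a^2 - 3*vT) by (apply sqrt_sqrt; lra).
  assert (Hs0pos : 0 < s0) by (apply sqrt_lt_R0; lra).
  assert (Hs0a : s0 < a) by (unfold a in *; nra).
  assert (Hvmin : vmin vT = (a - s0)/3) by reflexivity.
  split; [exact Hgs|].
  intros g k [Hg1 Hg2] Hk.
  assert (Hg : 0 < g) by lra.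
  split.
  - intros (vuc & vs & Hvuc & Hvs & HF & HFp).
    rewrite Hvmin in Hvs. unfold vi in Hvs. fold a in Hvs.
    assert (HFq : Fp vT vs = Fp vT (vi vT) - 3 * (vs - vi vT)^2)
      by (unfold Fp, vi; field).
    assert (vs - vi vT <> 0) by (unfold vi; fold a; lra).
    assert (Hlt : g * (k+1) < Fp vT (vi vT)).
    { rewrite <- HFp, HFq. assert (0 < (vs - vi vT)^2) by (apply pow_lt_1_compat || nra; nra). lra. }
    apply (Rmult_lt_compat_r (/ g)) in Hlt; [|apply Rinv_0_lt_compat; lra].
    replace (g * (k+1) * /g) with (k+1) in Hlt by (field; lra).
    unfold Rdiv. lra.
  - intros Hkl.
    set (c := g * (k+1)).
    assert (Hc : 0 < c) by (unfold c; nra).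
    assert (Hcl : c < Fp vT (vi vT)).
    { unfold c. assert (k + 1 < Fp vT (vi vT) / g) by lra.
      apply (Rmult_lt_compat_l g) in H; [|lra].
      replace (g * (Fp vT (vi vT) / g)) with (Fp vT (vi vT)) in H by (field; lra). lra. }
    rewrite HFpvi in Hcl.
    set (D := a^2 - 3*vT - 3*c).
    assert (HD : 0 < D) by (unfold D; lra).
    set (s := sqrt D).
    assert (Hssq : s * s = D) by (apply sqrt_sqrt; lra).
    assert (Hspos : 0 < s) by (apply sqrt_lt_R0; lra).
    assert (Hss0 : s < s0) by (unfold D in *; nra).
    set (vs := (a - s)/3).
    exists ((c * vs - F vT vs) / g), vs.
    assert (Hh2 : c * vs - F vT vs = vs^2 * (a - 2*vs)).
    { assert (HFpv : Fp vT vs = c).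
      { unfold Fp, vs. fold a. unfold D in Hssq. nra. }
      rewrite <- HFpv. unfold Fp, F, a. ring. }
    assert (Hvs0 : 0 < vs) by (unfold vs; lra).
    assert (Hvsb : vs < a/3) by (unfold vs; lra).
    split; [split|split; [split|split]].
    + apply Rdiv_lt_0_compat; [|lra]. rewrite Hh2.
      apply Rmult_lt_0_compat; [nra|lra].
    + apply (Rmult_lt_reg_r g); [lra|].
      replace ((c * vs - F vT vs) / g * g) with (c * vs - F vT vs) by (field; lra).
      rewrite Hh2.
      assert (Hb : vs^2 * (a - 2*vs) < a^3/27).
      { assert (a^3/27 - vs^2*(a-2*vs) = (a/3 - vs)*((a/3 - vs)*(a/3 + 2*vs))) by (field).
        assert (0 < (a/3 - vs)*((a/3 - vs)*(a/3 + 2*vs))).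
        { apply Rmult_lt_0_compat; [lra|]. apply Rmult_lt_0_compat; lra. }
        lra. }
      assert (gstar * Vu = a^3/27) by (unfold gstar; rewrite Hh; field; lra).
      nra.
    + rewrite Hvmin. unfold vs. lra.
    + unfold vi. fold a. exact Hvsb.
    + fold c. field. lra.
    + fold c. unfold Fp, vs. fold a. unfold D in Hssq. nra.
Qed.
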